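(* Let $(V,g)$ be a Euclidean vector space of dimension $n\ge3$, $N=\frac{(n-1)(n+2)}{2}$, $\theta>-1$. Let $R$ be an algebraic curvature tensor on $V$ with Ricci tensor $\operatorname{Ric}$, and $\mathring{R}$ its induced curvature operator of the second kind with eigenvalue average $\bar\lambda$. (1) If $\mathring{R}\in\mathcal{C}(\alpha,\theta)$ with $1\le\alpha\le n$, then $\operatorname{Ric}\ge\frac{n-1}{\alpha+1}(1-\alpha\theta)\bar\lambda\, g$. (2) If $\mathring{R}\in\mathcal{C}(\alpha,\theta)$ with $n\le\alpha<N$, then $\operatorname{Ric}\ge(n-1)\frac{n^2-n(\alpha\theta+\alpha-1)+2(\alpha\theta-1)}{n^2+n-2(\alpha+1)}\bar\lambda\, g$. Moreover, strict inequalities hold if $\mathring{R}\in\mathring{\mathcal{C}}(\alpha,\theta)$.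
   Context: $S^2_0(V)$ is the space of traceless symmetric two-tensors (dimension $N$). An algebraic curvature tensor is $R\in S^2(\wedge^2V)$ satisfying the first Bianchi identity. $\mathring{R}=\pi\circ\overline{R}:S^2_0(V)\to S^2_0(V)$ with $\overline{R}(h)_{ij}=\sum_{k,l}R_{iklj}h_{kl}$ and $\pi$ the projection onto traceless tensors. For a symmetric operator with eigenvalues $\lambda_1\le\cdots\le\lambda_N$ and average $\bar\lambda$, write $\lambda_1+\cdots+\lambda_\alpha:=\lambda_1+\cdots+\lambda_{[\alpha]}+(\alpha-[\alpha])\lambda_{[\alpha]+1}$; $\mathcal{C}(\alpha,\theta)$ is the cone of symmetric operators on $S^2_0(V)$ with $\alpha^{-1}(\lambda_1+\cdots+\lambda_\alpha)\ge-\theta\bar\lambda$, and $\mathring{\mathcal{C}}(\alpha,\theta)$ its interior. *)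

(* Defs.v *)
From HB Require Import structures.
From mathcomp Require Import all_boot all_order all_algebra.
From mathcomp Require Import reals.
Set Implicit Arguments. Unset Strict Implicit. Unset Printing Implicit Defensive.
Import Order.TTheory GRing.Theory Num.Theory.
Local Open Scope ring_scope.

(* V = R^n with the standard Euclidean inner product (orthonormal basis e_1..e_n).
   Tensors are given by their components in that basis. *)

Section Defs.
Variable R : realType.
Variable n : nat.

Definition tensor4 := 'I_n -> 'I_n -> 'I_n -> 'I_n -> R.

(* N = dim S^2_0(V) = (n-1)(n+2)/2 *)
Definition dimS20 (m : nat) : nat := ((m.-1) * (m + 2))./2.

(* algebraic curvature tensor: R in S^2(Lambda^2 V) + first Bianchi identity.
   Sign convention: R_{ijij} is the sectional curvature of span(e_i,e_j). *)
Definition is_alg_curv (Rt : tensor4) : Prop :=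
  forall i j k l,
    [/\ Rt i j k l = - Rt j i k l,
        Rt i j k l = - Rt i j l k,
        Rt i j k l = Rt k l i j &
        Rt i j k l + Rt j k i l + Rt k i j l = 0].

Definition Ric (Rt : tensor4) : 'M[R]_n := \matrix_(j, l) \sum_i Rt i j i l.

Definition Rbar (Rt : tensor4) (h : 'M[R]_n) : 'M[R]_n :=
  \matrix_(i, j) \sum_k \sum_l Rt i k l j * h k l.

Definition proj0 (A : 'M[R]_n) : 'M[R]_n := A - (\tr A / n%:R) *: 1%:M.

Definition Rring (Rt : tensor4) (h : 'M[R]_n) : 'M[R]_n := proj0 (Rbar Rt h).

Definition frob (A B : 'M[R]_n) : R := \tr (A *m B^T).

Definition sorted_eigbasis (Rt : tensor4) (h : 'I_(dimS20 n) -> 'M[R]_n)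
  (lam : 'I_(dimS20 n) -> R) : Prop :=
  [/\ forall a, (h a)^T = h a /\ \tr (h a) = 0,
      forall a b, frob (h a) (h b) = (a == b)%:R,
      forall a, Rring Rt (h a) = lam a *: h a &
      forall a b : 'I_(dimS20 n), (a <= b)%N -> lam a <= lam b].

Definition lamseq (lam : 'I_(dimS20 n) -> R) : seq R := [seq lam i | i <- enum 'I_(dimS20 n)].

(* lam_1 + ... + lam_alpha := lam_1 + ... + lam_[alpha] + (alpha - [alpha]) lam_{[alpha]+1} *)
Definition psum (lam : 'I_(dimS20 n) -> R) (alpha : R) : R :=
  \sum_(k < Num.truncn alpha) nth 0 (lamseq lam) k
  + (alpha - (Num.truncn alpha)%:R) * nth 0 (lamseq lam) (Num.truncn alpha).

Definition lambar (lam : 'I_(dimS20 n) -> R) : R :=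
  (\sum_i lam i) / (dimS20 n)%:R.

Definition inC (lam : 'I_(dimS20 n) -> R) (alpha theta : R) : Prop :=
  alpha^-1 * psum lam alpha >= - theta * lambar lam.

Definition inCint (lam : 'I_(dimS20 n) -> R) (alpha theta : R) : Prop :=
  alpha^-1 * psum lam alpha > - theta * lambar lam.

Definition form_ge (A : 'M[R]_n) (c : R) : Prop :=
  forall v : 'cV[R]_n, c * (v^T *m v) 0 0 <= (v^T *m A *m v) 0 0.
Definition form_gt (A : 'M[R]_n) (c : R) : Prop :=
  forall v : 'cV[R]_n, v != 0 -> c * (v^T *m v) 0 0 < (v^T *m A *m v) 0 0.

End Defs.

(* Main.v *)
Require Import Defs.
From HB Require Import structures.
From mathcomp Require Import all_boot all_order all_algebra.
From mathcomp Require Import reals ring lra zify.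
Set Implicit Arguments. Unset Strict Implicit. Unset Printing Implicit Defensive.
Import Order.TTheory GRing.Theory Num.Theory.
Local Open Scope ring_scope.

Module P3.
Lemma count_sel (m : nat) :
  (\sum_(i < m) \sum_(j < m | (i <= j)%N && (0 < j)%N) 1 = ((m.-1) * (m + 2))./2)%N.
Proof.
suff H : ((\sum_(i < m) \sum_(j < m | (i <= j)%N && (0 < j)%N) 1).*2 = (m.-1) * (m + 2))%N.
  by rewrite -H doubleK.
elim: m => [|m IH]; first by rewrite big_ord0.
rewrite big_ord_recr /=.
have -> : (\sum_(i < m) \sum_(j < m.+1 | (widen_ord (leqnSn m) i <= j)%N && (0 < j)%N) 1
   = \sum_(i < m) \sum_(j < m | (i <= j)%N && (0 < j)%N) 1 + m * (0 < m))%N.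
  have -> : (m * (0 < m) = \sum_(i < m) (0 < m))%N by rewrite sum_nat_const card_ord.
  rewrite -big_split /=; apply: eq_bigr => i _.
  rewrite big_mkcond big_ord_recr /= -big_mkcond /= (ltnW (ltn_ord i)) /=.
  by case: (0 < m)%N.
have -> : (\sum_(j < m.+1 | (m <= j)%N && (0 < j)%N) 1 = (0 < m))%N.
  rewrite big_mkcond big_ord_recr /= big1 ?leqnn //=.
  by move=> j _; rewrite leqNgt ltn_ord.
rewrite !doubleD IH; case: m {IH} => [|m] //=.
rewrite -!muln2; lia.
Qed.

Section Compl.
Variable R : realType.
Variable n : nat.

Lemma sum_mxvec (F : 'I_(n * n) -> R) :
  \sum_k F k = \sum_i \sum_j F (mxvec_index i j).
Proof.
rewrite (reindex _ (curry_mxvec_bij _ _)) /=.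
by rewrite pair_bigA; apply: eq_bigr => -[i j].
Qed.

Lemma sum_delta_r (T : finType) (F : T -> R) p : \sum_k F k * (k == p)%:R = F p.
Proof.
rewrite (bigD1 p) //= eqxx mulr1 big1 ?addr0 // => k /negbTE ->; by rewrite mulr0.
Qed.

Variable i0 : 'I_n.
Hypothesis i00 : nat_of_ord i0 = 0%N.

Definition sel (i j : 'I_n) := (i <= j)%N && (0 < j)%N.
Definition fD (A : 'M[R]_n) : 'M[R]_n := \matrix_(i, j) ((sel i j)%:R * A i j).
Definition fL (Y : 'M[R]_n) : 'M[R]_n := \matrix_(i, j) (Y i j + Y j i - (i == j)%:R * Y i j - ((i == i0) && (j == i0))%:R * \tr Y).

Lemma fL_linear : linear fL.
Proof.
move=> a A B; apply/matrixP => i j; rewrite !mxE mxtraceD mxtraceZ ?mxE; ring.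
Qed.

Lemma recon psi : psi^T = psi -> \tr psi = 0 -> fL (fD psi) = psi.
Proof.
move=> hs ht; apply/matrixP => i j; rewrite !mxE.
have psym k l : psi l k = psi k l by rewrite -{1}hs mxE.
have trD : \tr (fD psi) = - psi i0 i0.
  move: ht; rewrite /mxtrace (bigD1 i0) //= (bigD1 i0 (P := predT)) //=.
  move=> /eqP; rewrite addrC addr_eq0 => /eqP <-.
  rewrite mxE /sel i00 ltnn andbF mul0r add0r; apply: eq_bigr => k hk.
  rewrite mxE /sel leqnn /= lt0n.
  have -> : (k != 0%N :> nat) by apply: contra hk => /eqP hk; apply/eqP/val_inj; rewrite /= hk i00.
  by rewrite mul1r.
rewrite trD /sel psym.
case: (ltngtP i j) => hij.
- have hj : (0 < j)%N by apply: leq_ltn_trans hij.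
  rewrite ?(ltnW hij) hj ?(leqNgt j i) ?hij /= ?(gtn_eqF hij) ?(ltn_eqF hij) ?andbF.
  have -> : ((i == i0) && (j == i0)) = false.
    by apply/negbTE; apply/nandP; right; apply/eqP => e; move: hj; rewrite e i00.
  have -> : (i == j) = false by apply/eqP => e; move: hij; rewrite e ltnn.
  by rewrite !(mul0r, mul1r, subr0, addr0).
- have hi : (0 < i)%N by apply: leq_ltn_trans hij.
  rewrite ?(ltnW hij) hi ?(leqNgt i j) ?hij /= ?(gtn_eqF hij) ?(ltn_eqF hij) ?andbF.
  have -> : ((i == i0) && (j == i0)) = false.
    by apply/negbTE; apply/nandP; left; apply/eqP => e; move: hi; rewrite e i00.
  have -> : (i == j) = false by apply/eqP => e; move: hij; rewrite e ltnn.
  by rewrite !(mul0r, mul1r, subr0, add0r).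
- have eij : i = j by apply/val_inj.
  subst j; rewrite ?leqnn eqxx /=.
  case: (posnP i) => hi.
  + have -> : i = i0 by apply/val_inj; rewrite /= hi i00.
    rewrite eqxx /=; ring.
  + have -> : (i == i0) = false by apply/negbTE/eqP => e; move: hi; rewrite e i00.
    rewrite /= !mul1r mul0r subr0; ring.
Qed.

Lemma rank_sum (m : nat) (I : Type) (r : seq I) (P : pred I) (F : I -> 'M[R]_m) :
  (\rank (\sum_(i <- r | P i) F i)%R <= \sum_(i <- r | P i) \rank (F i))%N.
Proof.
apply: (big_ind2 (fun A k => (\rank A <= k)%N)) => //; first by rewrite mxrank0.
by move=> A1 k1 A2 k2 h1 h2; apply: leq_trans (mxrank_add A1 A2) (leq_add h1 h2).
Qed.

Definition Dm : 'M[R]_(n * n) :=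
  \sum_i \sum_(j | sel i j) delta_mx (mxvec_index i j) (mxvec_index i j).

Lemma rank_Dm : (\rank Dm <= dimS20 n)%N.
Proof.
apply: leq_trans; first exact: rank_sum.
rewrite /dimS20 -count_sel leq_sum // => i _.
apply: leq_trans; first exact: rank_sum.
by rewrite leq_sum // => j _; rewrite mxrank_delta.
Qed.

Lemma ix_inj i j k l : (mxvec_index i j == mxvec_index k l :> 'I_(n * n)) = (i == k) && (j == l).
Proof.
apply/eqP/andP => [/cast_ord_inj/enum_rank_inj [-> ->] // | [/eqP -> /eqP ->] //].
Qed.

Lemma rowdelta m k (u : 'rV[R]_m) (p : 'I_m) (q : 'I_k) : (u *m delta_mx p q) 0 q = u 0 p.
Proof.
rewrite mxE (bigD1 p) //= mxE !eqxx mulr1 big1 ?addr0 // => x /negbTE hk.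
by rewrite mxE hk mulr0.
Qed.

Lemma rowdelta0 m k (u : 'rV[R]_m) (p : 'I_m) (q r : 'I_k) : q != r -> (u *m delta_mx p q) 0 r = 0.
Proof.
move=> /negbTE hqr; rewrite mxE big1 // => x _; by rewrite mxE (eq_sym r q) hqr andbF mulr0.
Qed.

Lemma DmE A : mxvec A *m Dm = mxvec (fD A).
Proof.
apply/rowP => k; case/mxvec_indexP: k => k l; rewrite mxvecE [RHS]mxE.
have -> : (mxvec A *m Dm) 0 (mxvec_index k l) = \sum_i \sum_(j | sel i j)
    (mxvec A *m delta_mx (mxvec_index i j) (mxvec_index i j)) 0 (mxvec_index k l).
  by rewrite /Dm mulmx_sumr summxE; apply: eq_bigr => i _; rewrite mulmx_sumr summxE.
rewrite (bigD1 k) //= [X in _ + X = _]big1 ?addr0; last first.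
  move=> i hik; apply: big1 => j _.
  by apply: rowdelta0; rewrite ix_inj (negbTE hik).
case hs : (sel k l).
  rewrite (bigD1 l) //= rowdelta mxvecE big1 ?addr0 ?mul1r // => j /andP[_ hjl].
  by apply: rowdelta0; rewrite ix_inj eqxx /= (negbTE hjl).
rewrite big1 ?mul0r // => j hj.
by apply: rowdelta0; rewrite ix_inj eqxx /=; apply: contraTneq hj => ->; rewrite hs.
Qed.

Lemma frobE (A B : 'M[R]_n) : frob A B = \sum_i \sum_j A i j * B i j.
Proof.
rewrite /frob /mxtrace; apply: eq_bigr => i _; rewrite mxE; apply: eq_bigr => j _.
by rewrite mxE.
Qed.

Lemma frob_suml (I : finType) (c : I -> R) (F : I -> 'M[R]_n) B :
  frob (\sum_a c a *: F a) B = \sum_a c a * frob (F a) B.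
Proof.
rewrite /frob mulmx_suml raddf_sum; apply: eq_bigr => a _.
by rewrite -scalemxAl; apply: mxtraceZ.
Qed.

Variable h : 'I_(dimS20 n) -> 'M[R]_n.
Hypothesis hsym : forall a, (h a)^T = h a.
Hypothesis htr : forall a, \tr (h a) = 0.
Hypothesis horth : forall a b, frob (h a) (h b) = (a == b)%:R.

Definition Hm : 'M[R]_(dimS20 n, n * n) := \matrix_(a, k) mxvec (h a) 0 k.

Lemma rowHm a : row a Hm = mxvec (h a).
Proof. by apply/rowP => k; rewrite !mxE. Qed.

Lemma HmHt : Hm *m Hm^T = 1%:M.
Proof.
apply/matrixP => a b; rewrite !mxE sum_mxvec -horth frobE.
apply: eq_bigr => i _; apply: eq_bigr => j _.
by rewrite !mxE !mxvecE.
Qed.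

Lemma rankHm : \rank Hm = dimS20 n.
Proof.
apply/eqP; rewrite eqn_leq rank_leq_row /=.
rewrite -{1}(mxrank1 R (dimS20 n)) -HmHt; exact: mxrankM_maxl.
Qed.

Definition fLlin : {linear 'M[R]_n -> 'M[R]_n} :=
  HB.pack fL (GRing.isLinear.Build _ _ _ _ fL fL_linear).

Definition Lm := lin_mx fLlin.

Lemma recon_mx psi : psi^T = psi -> \tr psi = 0 -> mxvec psi *m (Dm *m Lm) = mxvec psi.
Proof. by move=> hs ht; rewrite mulmxA DmE mul_vec_lin /= recon. Qed.

Lemma HmDL : Hm *m (Dm *m Lm) = Hm.
Proof. by apply/row_matrixP => a; rewrite row_mul rowHm recon_mx. Qed.

Lemma sub_DL_Hm : (Dm *m Lm <= Hm)%MS.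
Proof.
have sHB : (Hm <= Dm *m Lm)%MS by rewrite -{1}HmDL submxMl.
case: (mxrank_leqif_sup sHB) => _ <-.
rewrite eqn_leq mxrankS //= rankHm.
apply: leq_trans (mxrankM_maxl _ _) rank_Dm.
Qed.

Lemma complete psi : psi^T = psi -> \tr psi = 0 -> psi = \sum_a frob psi (h a) *: h a.
Proof.
move=> hs ht.
have : (mxvec psi <= Hm)%MS.
  by apply: submx_trans sub_DL_Hm; rewrite -(recon_mx hs ht) submxMl.
case/submxP => D eD.
have e2 : psi = \sum_a D 0 a *: h a.
  apply: (can_inj mxvecK); rewrite eD mulmx_sum_row linear_sum; apply: eq_bigr => a _.
  by rewrite rowHm linearZ.
have ec b : frob psi (h b) = D 0 b.
  by rewrite {1}e2 frob_suml; under eq_bigr do rewrite horth; rewrite sum_delta_r.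
by rewrite {1}e2; apply: eq_bigr => a _; rewrite ec.
Qed.

End Compl.

End P3.
Import P3.

Module P4.

Section Quad.
Variable R : realType.
Variable n : nat.
Hypothesis hn : (0 < n)%N.
Variable Rt : tensor4 R n.
Variable h : 'I_(dimS20 n) -> 'M[R]_n.
Variable lam : 'I_(dimS20 n) -> R.
Hypothesis hsym : forall a, (h a)^T = h a.
Hypothesis htr : forall a, \tr (h a) = 0.
Hypothesis horth : forall a b, frob (h a) (h b) = (a == b)%:R.
Hypothesis heig : forall a, Rring Rt (h a) = lam a *: h a.

Lemma complete' psi : psi^T = psi -> \tr psi = 0 -> psi = \sum_a frob psi (h a) *: h a.
Proof. exact: (@complete R n (Ordinal hn) (erefl _) h hsym htr horth psi). Qed.

Lemma nR0 : (n%:R : R) != 0.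
Proof. by rewrite pnatr_eq0 -lt0n. Qed.

Lemma frobC (A B : 'M[R]_n) : frob A B = frob B A.
Proof. by rewrite !frobE; apply: eq_bigr => i _; apply: eq_bigr => j _; rewrite mulrC. Qed.

Lemma frobDl (A B C : 'M[R]_n) : frob (A + B) C = frob A C + frob B C.
Proof. by rewrite /frob mulmxDl mxtraceD. Qed.
Lemma frobZl c (A C : 'M[R]_n) : frob (c *: A) C = c * frob A C.
Proof. by rewrite /frob -scalemxAl mxtraceZ. Qed.
Lemma frobNl (A C : 'M[R]_n) : frob (- A) C = - frob A C.
Proof. by rewrite /frob mulNmx raddfN. Qed.
Lemma frobBl (A B C : 'M[R]_n) : frob (A - B) C = frob A C - frob B C.
Proof. by rewrite frobDl frobNl. Qed.
Lemma frobDr (A B C : 'M[R]_n) : frob C (A + B) = frob C A + frob C B.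
Proof. by rewrite frobC frobDl !(frobC C). Qed.
Lemma frobZr c (A C : 'M[R]_n) : frob C (c *: A) = c * frob C A.
Proof. by rewrite frobC frobZl frobC. Qed.
Lemma frobBr (A B C : 'M[R]_n) : frob C (A - B) = frob C A - frob C B.
Proof. by rewrite frobC frobBl !(frobC C). Qed.
Lemma frob1l (A : 'M[R]_n) : frob 1%:M A = \tr A.
Proof. by rewrite /frob mul1mx mxtrace_tr. Qed.
Lemma frob1r (A : 'M[R]_n) : frob A 1%:M = \tr A.
Proof. by rewrite frobC frob1l. Qed.

Lemma Rbar_linear : linear (Rbar Rt).
Proof.
move=> a A B; apply/matrixP => i j; rewrite !mxE mulr_sumr -big_split /=.
apply: eq_bigr => k _; rewrite mulr_sumr -big_split /=; apply: eq_bigr => l _.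
by rewrite !mxE; ring.
Qed.

Lemma proj0_linear : linear (@proj0 R n).
Proof.
move=> a A B; rewrite /proj0 mxtraceD mxtraceZ.
rewrite scalerBr !scalerA mulrA -[a * _ / _]mulrA; apply/matrixP => i j; rewrite !mxE; ring.
Qed.

Lemma Rring_linear : linear (Rring Rt).
Proof. by move=> a A B; rewrite /Rring Rbar_linear proj0_linear. Qed.

Definition RringL : {linear 'M[R]_n -> 'M[R]_n} :=
  HB.pack (Rring Rt) (GRing.isLinear.Build _ _ _ _ (Rring Rt) Rring_linear).

Lemma quad_expand psi : psi^T = psi -> \tr psi = 0 ->
  frob (Rring Rt psi) psi = \sum_a lam a * (frob psi (h a)) ^+ 2.
Proof.
move=> hs ht.
have e := complete' hs ht.
have -> : Rring Rt psi = \sum_a (frob psi (h a) * lam a) *: h a.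
  rewrite {1}e; have -> : Rring Rt (\sum_a frob psi (h a) *: h a) =
     RringL (\sum_a frob psi (h a) *: h a) by [].
  rewrite linear_sum; apply: eq_bigr => a _; rewrite linearZ /= heig scalerA.
  done.
rewrite frob_suml; apply: eq_bigr => a _; rewrite (frobC (h a)); ring.
Qed.

Lemma norm_expand psi : psi^T = psi -> \tr psi = 0 ->
  frob psi psi = \sum_a (frob psi (h a)) ^+ 2.
Proof.
move=> hs ht.
rewrite {1}(complete' hs ht) frob_suml.
by apply: eq_bigr => a _; rewrite (frobC (h a)) expr2.
Qed.

End Quad.

End P4.
Import P4.

Module P5.

Section Tests.
Variable R : realType.
Variable n : nat.
Hypothesis hn : (0 < n)%N.
Variable Rt : tensor4 R n.
Hypothesis hac : is_alg_curv Rt.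
Variable h : 'I_(dimS20 n) -> 'M[R]_n.
Variable lam : 'I_(dimS20 n) -> R.
Hypothesis hsym : forall a, (h a)^T = h a.
Hypothesis htr : forall a, \tr (h a) = 0.
Hypothesis horth : forall a b, frob (h a) (h b) = (a == b)%:R.
Hypothesis heig : forall a, Rring Rt (h a) = lam a *: h a.

Lemma RA1 i j k l : Rt i j k l = - Rt j i k l. Proof. by case: (hac i j k l). Qed.
Lemma RA2 i j k l : Rt i j k l = - Rt i j l k. Proof. by case: (hac i j k l). Qed.
Lemma RS i j k l : Rt i j k l = Rt k l i j. Proof. by case: (hac i j k l). Qed.

Notation S := (\tr (Ric Rt)).
Notation nR := (n%:R : R).

Lemma proj0_sym (phi : 'M[R]_n) : phi^T = phi -> (proj0 phi)^T = proj0 phi.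
Proof.
move=> hs; apply/matrixP => i j; rewrite !mxE (eq_sym j i).
by have := congr1 (fun M : 'M[R]_n => M i j) hs; rewrite mxE => ->.
Qed.

Lemma proj0_tr (phi : 'M[R]_n) : \tr (proj0 phi) = 0.
Proof.
by rewrite /proj0 raddfB /= mxtraceZ mxtrace1 divfK ?subrr // nR0.
Qed.

Lemma proj0_frob_h (phi : 'M[R]_n) a : frob (proj0 phi) (h a) = frob phi (h a).
Proof. by rewrite /proj0 frobBl frobZl frob1l htr mulr0 subr0. Qed.

Lemma Rbar1 : Rbar Rt 1%:M = - Ric Rt.
Proof.
apply/matrixP => i j; rewrite !mxE -sumrN; apply: eq_bigr => k _.
rewrite (bigD1 k) //= big1 ?addr0 => [|l /negbTE hl]; last by rewrite mxE eq_sym hl mulr0.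
by rewrite mxE eqxx mulr1 RA1.
Qed.

Lemma frob_Rbar_1 (A : 'M[R]_n) : frob (Rbar Rt A) 1%:M = - frob (Ric Rt) A.
Proof.
rewrite frob1r frobE /mxtrace -sumrN.
under eq_bigr do rewrite mxE.
rewrite exchange_big /=; apply: eq_bigr => k _.
rewrite -sumrN; under [RHS]eq_bigr do rewrite mxE mulr_suml.
rewrite exchange_big /=; apply: eq_bigr => l _.
by rewrite -sumrN; apply: eq_bigr => i _; rewrite RA2 mulNr.
Qed.

Lemma Rring_frob (psi : 'M[R]_n) : \tr psi = 0 -> frob (Rring Rt psi) psi = frob (Rbar Rt psi) psi.
Proof. by move=> ht; rewrite /Rring /proj0 frobBl frobZl frob1l ht mulr0 subr0. Qed.

Lemma RbarB (A B : 'M[R]_n) c : Rbar Rt (A - c *: B) = Rbar Rt A - c *: Rbar Rt B.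
Proof.
apply/matrixP => i j; rewrite !mxE mulr_sumr -sumrB; apply: eq_bigr => k _.
rewrite mulr_sumr -sumrB; apply: eq_bigr => l _; rewrite !mxE; ring.
Qed.

Lemma P1 (phi : 'M[R]_n) : phi^T = phi ->
  \sum_a lam a * (frob phi (h a)) ^+ 2 =
  frob (Rbar Rt phi) phi + 2 * (\tr phi / nR) * frob (Ric Rt) phi - (\tr phi / nR) ^+ 2 * S.
Proof.
move=> hs.
have e := quad_expand hn hsym htr horth heig (proj0_sym hs) (proj0_tr phi).
under eq_bigr do rewrite -proj0_frob_h.
rewrite -e Rring_frob ?proj0_tr // /proj0 RbarB Rbar1.
rewrite !(frobBl, frobZl, frobBr, frobZr, frobNl) ?frob_Rbar_1 ?frob1r ?frob1l.
ring.
Qed.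

Lemma P2 (phi : 'M[R]_n) : phi^T = phi ->
  \sum_a (frob phi (h a)) ^+ 2 = frob phi phi - (\tr phi) ^+ 2 / nR.
Proof.
move=> hs.
have e := norm_expand hn hsym htr horth (proj0_sym hs) (proj0_tr phi).
under eq_bigr do rewrite -proj0_frob_h.
rewrite -e /proj0 !(frobBl, frobZl, frobBr, frobZr) !frob1r frob1l mxtrace1.
have hn0 : (n%:R : R) != 0 by rewrite pnatr_eq0 -lt0n.
by field.
Qed.

End Tests.

End P5.
Import P5.

Module P6.

Section Vec.
Variable R : realType.
Variable n : nat.

Definition op (a b : 'I_n -> R) : 'M[R]_n := \matrix_(i, j) (a i * b j).
Definition ev (m : 'I_n) : 'I_n -> R := fun i => (i == m)%:R.
Definition dot (a b : 'I_n -> R) := \sum_i a i * b i.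
Definition mv (A : 'M[R]_n) (b : 'I_n -> R) : 'I_n -> R := fun i => \sum_j A i j * b j.

Lemma frob_op a b X : frob (op a b) X = \sum_i \sum_j a i * b j * X i j.
Proof. by rewrite frobE; apply: eq_bigr => i _; apply: eq_bigr => j _; rewrite mxE. Qed.

Lemma frob_op_ev_r a m X : frob (op a (ev m)) X = \sum_i a i * X i m.
Proof.
rewrite frob_op; apply: eq_bigr => i _.
rewrite (bigD1 m) //= /ev eqxx mulr1 big1 ?addr0 // => j /negbTE ->; by rewrite mulr0 mul0r.
Qed.

Lemma frob_op_ev_l m a X : frob (op (ev m) a) X = \sum_j a j * X m j.
Proof.
rewrite frob_op (bigD1 m) //= [X in _ + X]big1 ?addr0; last first.
  by move=> i /negbTE hi; apply: big1 => j _; rewrite /ev hi !mul0r.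
by apply: eq_bigr => j _; rewrite /ev eqxx mul1r.
Qed.

Lemma sum_delta_l (T : finType) (F : T -> R) p : \sum_k (k == p)%:R * F k = F p.
Proof.
rewrite (bigD1 p) //= eqxx mul1r big1 ?addr0 // => k /negbTE ->; by rewrite mul0r.
Qed.

Lemma sum_delta_r' (T : finType) (F : T -> R) p : \sum_k F k * (k == p)%:R = F p.
Proof.
rewrite (bigD1 p) //= eqxx mulr1 big1 ?addr0 // => k /negbTE ->; by rewrite mulr0.
Qed.

Lemma sum3 (I : finType) (a b c : R) (F G H : I -> R) :
  \sum_i (a * F i + b * G i + c * H i) = a * \sum_i F i + b * \sum_i G i + c * \sum_i H i.
Proof. by rewrite !big_split /= -!mulr_sumr. Qed.

End Vec.

End P6.
Import P6.

Module P7.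

Section T.
Variable R : realType.
Variable n : nat.
Hypothesis hn : (0 < n)%N.
Variable Rt : tensor4 R n.
Hypothesis hac : is_alg_curv Rt.
Variable h : 'I_(dimS20 n) -> 'M[R]_n.
Variable lam : 'I_(dimS20 n) -> R.
Hypothesis hsym : forall a, (h a)^T = h a.
Hypothesis htr : forall a, \tr (h a) = 0.
Hypothesis horth : forall a b, frob (h a) (h b) = (a == b)%:R.
Hypothesis heig : forall a, Rring Rt (h a) = lam a *: h a.

Notation S := (\tr (Ric Rt)).
Local Notation ev := (@ev R n).
Notation nR := (n%:R : R).

Lemma hn0 : nR != 0.
Proof. by rewrite pnatr_eq0 -lt0n. Qed.

Lemma RA1 i j k l : Rt i j k l = - Rt j i k l. Proof. by case: (hac i j k l). Qed.
Lemma RA2 i j k l : Rt i j k l = - Rt i j l k. Proof. by case: (hac i j k l). Qed.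
Lemma RS i j k l : Rt i j k l = Rt k l i j. Proof. by case: (hac i j k l). Qed.
Lemma R0a i j k : Rt i j k k = 0.
Proof. have := RA2 i j k k; lra. Qed.
Lemma R0b i k l : Rt i i k l = 0.
Proof. have := RA1 i i k l; lra. Qed.

Lemma hE a i j : h a i j = h a j i.
Proof. by have := congr1 (fun M : 'M[R]_n => M i j) (hsym a); rewrite mxE. Qed.

Lemma RicS i j : Ric Rt i j = Ric Rt j i.
Proof. by rewrite !mxE; apply: eq_bigr => k _; exact: RS. Qed.

Definition rho (v : 'I_n -> R) := \sum_i \sum_j v i * Ric Rt i j * v j.
Definition phi (v : 'I_n -> R) m := op v (ev m) + op (ev m) v.

Lemma phi_sym v m : (phi v m)^T = phi v m.
Proof. by apply/matrixP => i j; rewrite !mxE; ring. Qed.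

Lemma phi_h v m a : frob (phi v m) (h a) = 2 * mv (h a) v m.
Proof.
rewrite frobDl frob_op_ev_r frob_op_ev_l /mv.
have e1 : \sum_i v i * h a i m = \sum_j h a m j * v j.
  by apply: eq_bigr => i _; rewrite hE mulrC.
have e2 : \sum_j v j * h a m j = \sum_j h a m j * v j.
  by apply: eq_bigr => j _; rewrite mulrC.
rewrite e1 e2; ring.
Qed.

Lemma phi_Ric v m : frob (Ric Rt) (phi v m) = 2 * mv (Ric Rt) v m.
Proof.
rewrite frobC frobDl frob_op_ev_r frob_op_ev_l /mv.
have e1 : \sum_i v i * Ric Rt i m = \sum_j Ric Rt m j * v j.
  by apply: eq_bigr => i _; rewrite RicS mulrC.
have e2 : \sum_j v j * Ric Rt m j = \sum_j Ric Rt m j * v j.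
  by apply: eq_bigr => j _; rewrite mulrC.
rewrite e1 e2; ring.
Qed.

Lemma phi_tr v m : \tr (phi v m) = 2 * v m.
Proof.
rewrite -frob1r frobDl frob_op_ev_r frob_op_ev_l.
have e1 : \sum_i v i * (1%:M : 'M[R]_n) i m = \sum_i v i * (i == m)%:R.
  by apply: eq_bigr => i _; rewrite mxE.
have e2 : \sum_j v j * (1%:M : 'M[R]_n) m j = \sum_j v j * (j == m)%:R.
  by apply: eq_bigr => j _; rewrite mxE eq_sym.
rewrite e1 e2 !sum_delta_r'; ring.
Qed.

Lemma phi_phi v m : frob (phi v m) (phi v m) = 2 * dot v v + 2 * v m ^+ 2.
Proof.
rewrite {1}/phi frobDl frob_op_ev_r frob_op_ev_l.
have e1 : \sum_i v i * (phi v m) i m = \sum_i (v i * v i + v m * (v i * (i == m)%:R)).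
  by apply: eq_bigr => i _; rewrite !mxE /ev eqxx /=; ring.
have e2 : \sum_j v j * (phi v m) m j = \sum_j (v j * v j + v m * (v j * (j == m)%:R)).
  by apply: eq_bigr => j _; rewrite !mxE /ev eqxx /=; ring.
rewrite e1 e2 !big_split /= -!mulr_sumr !sum_delta_r' /dot; ring.
Qed.

Lemma Rbar_phi v m i j :
  (Rbar Rt (phi v m)) i j = \sum_k Rt i k m j * v k + \sum_l Rt i m l j * v l.
Proof.
rewrite mxE.
have -> : \sum_k \sum_l Rt i k l j * (phi v m) k l =
    \sum_k (Rt i k m j * v k + (k == m)%:R * \sum_l Rt i k l j * v l).
  apply: eq_bigr => k _.
  have -> : \sum_l Rt i k l j * (phi v m) k l =
      \sum_l (v k * (Rt i k l j * (l == m)%:R) + (k == m)%:R * (Rt i k l j * v l)).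
    by apply: eq_bigr => l _; rewrite !mxE /ev; ring.
  by rewrite big_split /= -!mulr_sumr sum_delta_r' mulrC.
by rewrite big_split /= sum_delta_l.
Qed.

Lemma Bf_phi v m : frob (Rbar Rt (phi v m)) (phi v m) =
  \sum_i v i * \sum_l Rt i m l m * v l + \sum_j v j * \sum_k Rt m k m j * v k.
Proof.
rewrite frobC {1}/phi frobDl frob_op_ev_r frob_op_ev_l.
congr (_ + _); apply: eq_bigr => i _; rewrite Rbar_phi.
  by rewrite big1 ?add0r // => k _; rewrite R0a mul0r.
by rewrite [X in _ + X]big1 ?addr0 // => k _; rewrite R0b mul0r.
Qed.

Lemma sumBf (v : 'I_n -> R) : \sum_m frob (Rbar Rt (phi v m)) (phi v m) = 2 * rho v.
Proof.
under eq_bigr do rewrite Bf_phi.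
rewrite big_split /=.
have e1 : \sum_m \sum_i v i * \sum_l Rt i m l m * v l = rho v.
  rewrite /rho exchange_big /=; apply: eq_bigr => i _.
  under eq_bigr do rewrite mulr_sumr.
  rewrite exchange_big /=; apply: eq_bigr => l _.
  rewrite mxE mulr_sumr mulr_suml; apply: eq_bigr => m _.
  rewrite RA1 RA2 opprK; ring.
have e2 : \sum_m \sum_j v j * \sum_k Rt m k m j * v k = rho v.
  rewrite /rho exchange_big /=.
  have -> : \sum_j \sum_m v j * \sum_k Rt m k m j * v k =
            \sum_j \sum_k v k * Ric Rt k j * v j.
    apply: eq_bigr => j _.
    under eq_bigr do rewrite mulr_sumr.
    rewrite exchange_big /=; apply: eq_bigr => k _.
    rewrite mxE mulr_sumr mulr_suml; apply: eq_bigr => m _; ring.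
  by rewrite exchange_big.
rewrite e1 e2; ring.
Qed.

Definition pp (v : 'I_n -> R) a := \sum_m (mv (h a) v m) ^+ 2.
Definition ss (v : 'I_n -> R) a := frob (op v v) (h a).

Lemma sum_v_mv (v : 'I_n -> R) : \sum_m v m * mv (Ric Rt) v m = rho v.
Proof.
rewrite /rho /mv; apply: eq_bigr => i _; rewrite mulr_sumr; apply: eq_bigr => j _; ring.
Qed.

Lemma T2 (v : 'I_n -> R) : \sum_a lam a * (4 * pp v a) =
  2 * rho v * (1 + 4 / nR) - 4 * dot v v * S / nR ^+ 2.
Proof.
have L : \sum_a lam a * (4 * pp v a) =
    \sum_m \sum_a lam a * (frob (phi v m) (h a)) ^+ 2.
  rewrite exchange_big /=; apply: eq_bigr => a _.
  rewrite /pp !mulr_sumr; apply: eq_bigr => m _; rewrite phi_h; ring.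
rewrite L.
under eq_bigr do rewrite (P1 hn hac hsym htr horth heig (phi_sym v _)) phi_tr phi_Ric.
have hn0 := hn0.
have -> : \sum_m (frob (Rbar Rt (phi v m)) (phi v m) + 2 * (2 * v m / nR) * (2 * mv (Ric Rt) v m)
     - (2 * v m / nR) ^+ 2 * S) =
   \sum_m (1 * frob (Rbar Rt (phi v m)) (phi v m) + (8 / nR) * (v m * mv (Ric Rt) v m)
     + (- (4 * S / nR ^+ 2)) * (v m ^+ 2)).
  by apply: eq_bigr => m _; field.
rewrite sum3 sumBf sum_v_mv.
have -> : \sum_m v m ^+ 2 = dot v v by apply: eq_bigr => m _; rewrite expr2.
by field.
Qed.

Lemma T2b (v : 'I_n -> R) : \sum_a (4 * pp v a) = 2 * nR * dot v v + 2 * dot v v - 4 * dot v v / nR.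
Proof.
have L : \sum_a (4 * pp v a) = \sum_m \sum_a (frob (phi v m) (h a)) ^+ 2.
  rewrite exchange_big /=; apply: eq_bigr => a _.
  rewrite /pp !mulr_sumr; apply: eq_bigr => m _; rewrite phi_h; ring.
rewrite L.
under eq_bigr do rewrite (P2 hn hsym htr horth (phi_sym v _)) phi_tr phi_phi.
have hn0 := hn0.
have -> : \sum_m (2 * dot v v + 2 * v m ^+ 2 - (2 * v m) ^+ 2 / nR) =
   \sum_m ((2 * dot v v) * 1 + (2 - 4 / nR) * (v m ^+ 2) + 0 * 0).
  by apply: eq_bigr => m _; field.
rewrite sum3 mul0r addr0 sumr_const card_ord.
have -> : \sum_m v m ^+ 2 = dot v v by apply: eq_bigr => m _; rewrite expr2.
rewrite -mulr_natr; by field.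
Qed.

Lemma Bf0 (v : 'I_n -> R) : frob (Rbar Rt (op v v)) (op v v) = 0.
Proof.
pose F i k := \sum_j \sum_l Rt i k l j * v k * v l * v i * v j.
have e : frob (Rbar Rt (op v v)) (op v v) = \sum_i \sum_k F i k.
  rewrite frobE; apply: eq_bigr => i _.
  have -> : \sum_j Rbar Rt (op v v) i j * op v v i j =
      \sum_j \sum_k \sum_l Rt i k l j * v k * v l * v i * v j.
    apply: eq_bigr => j _; rewrite !mxE mulr_suml; apply: eq_bigr => k _.
    rewrite mulr_suml; apply: eq_bigr => l _; rewrite mxE; ring.
  by rewrite exchange_big.
have asym i k : F k i = - F i k.
  rewrite /F -sumrN; apply: eq_bigr => j _; rewrite -sumrN; apply: eq_bigr => l _.
  rewrite (RA1 k i); ring.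
have X : \sum_i \sum_k F i k = - \sum_i \sum_k F i k.
  rewrite {1}exchange_big /= -sumrN; apply: eq_bigr => k _.
  rewrite -sumrN; apply: eq_bigr => i _; exact: asym.
rewrite e; move: X; set x := \sum_i \sum_k F i k; lra.
Qed.

Lemma tr_opvv (v : 'I_n -> R) : \tr (op v v) = dot v v.
Proof. by rewrite /mxtrace /dot; apply: eq_bigr => i _; rewrite mxE. Qed.

Lemma Ric_opvv (v : 'I_n -> R) : frob (Ric Rt) (op v v) = rho v.
Proof.
rewrite frobC frob_op /rho; apply: eq_bigr => i _; apply: eq_bigr => j _; ring.
Qed.

Lemma opvv_sym (v : 'I_n -> R) : (op v v)^T = op v v.
Proof. by apply/matrixP => i j; rewrite !mxE mulrC. Qed.

Lemma opvv_norm (v : 'I_n -> R) : frob (op v v) (op v v) = dot v v ^+ 2.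
Proof.
rewrite frob_op expr2 /dot mulr_suml; apply: eq_bigr => i _.
rewrite mulr_sumr; apply: eq_bigr => j _; rewrite mxE; ring.
Qed.

Lemma T3 (v : 'I_n -> R) : \sum_a lam a * (ss v a) ^+ 2 =
  2 * dot v v * rho v / nR - (dot v v) ^+ 2 * S / nR ^+ 2.
Proof.
rewrite /ss (P1 hn hac hsym htr horth heig (opvv_sym v)) Bf0 tr_opvv Ric_opvv.
have hn0 := hn0; by field.
Qed.

Lemma T3b (v : 'I_n -> R) : \sum_a (ss v a) ^+ 2 = (dot v v) ^+ 2 - (dot v v) ^+ 2 / nR.
Proof.
by rewrite /ss (P2 hn hsym htr horth (opvv_sym v)) opvv_norm tr_opvv.
Qed.

Lemma pp_ev p a : pp (ev p) a = \sum_m (h a m p) ^+ 2.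
Proof.
by apply: eq_bigr => m _; rewrite /mv sum_delta_r'.
Qed.

Lemma sum_pp_ev a : \sum_p pp (ev p) a = 1.
Proof.
transitivity (frob (h a) (h a)); last by rewrite horth eqxx.
rewrite frobE.
under eq_bigr do rewrite pp_ev.
rewrite exchange_big; apply: eq_bigr => i _; apply: eq_bigr => j _; by rewrite expr2.
Qed.

Lemma rho_ev p : rho (ev p) = Ric Rt p p.
Proof.
rewrite /rho (bigD1 p) //= [X in _ + X]big1 ?addr0; last first.
  by move=> i /negbTE hi; apply: big1 => j _; rewrite /ev hi !mul0r.
rewrite /ev eqxx /=.
under eq_bigr do rewrite mul1r.
by rewrite sum_delta_r'.
Qed.

Lemma dot_ev p : dot (ev p) (ev p) = 1.
Proof. by rewrite /dot; under eq_bigr do rewrite /ev; rewrite sum_delta_r' eqxx. Qed.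

Lemma T1 : \sum_a lam a = S * (nR + 2) / (2 * nR).
Proof.
have E := fun p => T2 (ev p).
have L : \sum_p \sum_a lam a * (4 * pp (ev p) a) = 4 * \sum_a lam a.
  rewrite exchange_big /= mulr_sumr; apply: eq_bigr => a _.
  by rewrite -mulr_sumr -mulr_sumr sum_pp_ev; ring.
have hn0 := hn0.
move: L; under eq_bigr do rewrite E rho_ev dot_ev.
have -> : \sum_p (2 * Ric Rt p p * (1 + 4 / nR) - 4 * 1 * S / nR ^+ 2) =
    \sum_p ((2 * (1 + 4 / nR)) * Ric Rt p p + (- (4 * S / nR ^+ 2)) * 1 + 0 * 0).
  by apply: eq_bigr => p _; ring.
rewrite sum3 mul0r addr0 sumr_const card_ord -/(mxtrace _) -mulr_natr => H.
have -> : \sum_a lam a = (4 * \sum_a lam a) / 4 by field.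
rewrite -H; field; exact: hn0.
Qed.

Lemma NR : ((dimS20 n)%:R : R) = (nR - 1) * (nR + 2) / 2.
Proof.
have L : \sum_p \sum_a (4 * pp (ev p) a) = 4 * (dimS20 n)%:R.
  rewrite exchange_big /=.
  have -> : \sum_a \sum_p 4 * pp (ev p) a = \sum_(a : 'I_(dimS20 n)) (4 : R).
    by apply: eq_bigr => a _; rewrite -mulr_sumr sum_pp_ev mulr1.
  by rewrite sumr_const card_ord mulr_natr.
have hn0 := hn0.
move: L; under eq_bigr do rewrite T2b dot_ev.
rewrite sumr_const card_ord -mulr_natr => H.
have -> : ((dimS20 n)%:R : R) = (4 * (dimS20 n)%:R) / 4 by field.
rewrite -H; field; exact: hn0.
Qed.

End T.

End P7.
Import P7.

Module P8.

Section Bounds.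
Variable R : realType.
Variable n : nat.
Hypothesis hn : (1 < n)%N.
Variable h : 'I_(dimS20 n) -> 'M[R]_n.
Hypothesis hsym : forall a, (h a)^T = h a.
Hypothesis htr : forall a, \tr (h a) = 0.
Hypothesis horth : forall a b, frob (h a) (h b) = (a == b)%:R.
Variable v : 'I_n -> R.
Hypothesis hv : dot v v = 1.
Variable a : 'I_(dimS20 n).

Notation nR := (n%:R : R).
Notation w := (mv (h a) v).
Notation s := (ss h v a).
Notation p := (pp h v a).

Lemma hE' i j : h a i j = h a j i.
Proof. by have := congr1 (fun M : 'M[R]_n => M i j) (hsym a); rewrite mxE. Qed.

Lemma dotC (x y : 'I_n -> R) : dot x y = dot y x.
Proof. by apply: eq_bigr => i _; rewrite mulrC. Qed.

Lemma frob_op_h (x y : 'I_n -> R) : frob (op x y) (h a) = dot x (mv (h a) y).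
Proof.
rewrite frob_op /dot /mv; apply: eq_bigr => i _; rewrite mulr_sumr.
by apply: eq_bigr => j _; ring.
Qed.

Lemma dot_mv_sym (x y : 'I_n -> R) : dot x (mv (h a) y) = dot y (mv (h a) x).
Proof.
rewrite /dot /mv.
under eq_bigr do rewrite mulr_sumr.
under [RHS]eq_bigr do rewrite mulr_sumr.
rewrite exchange_big; apply: eq_bigr => j _; apply: eq_bigr => i _; rewrite hE'; ring.
Qed.

Lemma s_dot : s = dot v w.
Proof. by rewrite /ss frob_op_h. Qed.

Lemma p_dot : p = dot w w.
Proof. by rewrite /pp /dot; apply: eq_bigr => m _; rewrite expr2. Qed.

Lemma frob_opop (x y z t : 'I_n -> R) : frob (op x y) (op z t) = dot x z * dot y t.
Proof.
rewrite frob_op /dot mulr_suml; apply: eq_bigr => i _.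
rewrite mulr_sumr; apply: eq_bigr => j _; rewrite mxE; ring.
Qed.

Lemma tr_op (x y : 'I_n -> R) : \tr (op x y) = dot x y.
Proof. by rewrite /mxtrace /dot; apply: eq_bigr => i _; rewrite mxE. Qed.

Lemma frobNr (A C : 'M[R]_n) : frob C (- A) = - frob C A.
Proof. by rewrite frobC frobNl frobC. Qed.

Lemma frob_ge0 (M : 'M[R]_n) : 0 <= frob M M.
Proof.
rewrite frobE; apply: sumr_ge0 => i _; apply: sumr_ge0 => j _; rewrite -expr2; exact: sqr_ge0.
Qed.

Lemma B1 : s ^+ 2 <= p.
Proof.
have H : 0 <= \sum_m (w m - s * v m) ^+ 2 by apply: sumr_ge0 => m _; exact: sqr_ge0.
have E2 : \sum_m (w m - s * v m) ^+ 2 = dot w w - 2 * s * dot v w + s ^+ 2 * dot v v.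
  rewrite /dot mulr_sumr mulr_sumr -sumrB -big_split /=; apply: eq_bigr => m _; ring.
rewrite E2 hv -s_dot -p_dot in H; lra.
Qed.

Lemma B2 : 2 * (p - s ^+ 2) + nR / (nR - 1) * s ^+ 2 <= 1.
Proof.
have hn1 : nR - 1 != 0.
  by rewrite subr_eq0 pnatr_eq1; apply/eqP => e; move: hn; rewrite e.
pose M := h a - op w v - op v w + (s * (nR - 2) / (nR - 1)) *: op v v
          + (s / (nR - 1)) *: 1%:M.
have H := frob_ge0 M.
rewrite /M !(frobDl, frobNl, frobZl, frobDr, frobNr, frobZr) in H.
rewrite !(frobC (h a) (op _ _)) !frob_op_h !frob_opop in H.
rewrite !frob1r !frob1l !tr_op htr mxtrace1 in H.
rewrite horth eqxx /= in H.
rewrite (dot_mv_sym v w) (dotC w v) -!s_dot -!p_dot !hv in H.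
have E : forall X : R, X = 1 - (2 * (p - s ^+ 2) + nR / (nR - 1) * s ^+ 2) -> 0 <= X ->
    2 * (p - s ^+ 2) + nR / (nR - 1) * s ^+ 2 <= 1 by move=> X -> ; lra.
apply: (E _ _ H); field; done.
Qed.

End Bounds.

End P8.
Import P8.

Module P9.

Section KyFan.
Variable R : realType.
Variable n : nat.
Notation N := (dimS20 n).

Lemma nth_lamseq (lam : 'I_N -> R) (a : 'I_N) : nth 0 (lamseq lam) a = lam a.
Proof. by rewrite /lamseq (nth_map a) ?size_enum_ord // nth_ord_enum. Qed.

Lemma kyfan (lam d : 'I_N -> R) (alpha : R) :
  (forall a b : 'I_N, (a <= b)%N -> lam a <= lam b) ->
  (forall a, 0 <= d a <= 1) -> \sum_a d a = alpha -> 0 <= alpha -> alpha < N%:R ->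
  psum lam alpha <= \sum_a lam a * d a.
Proof.
move=> hmono hd hsum ha0 haN.
set k := Num.truncn alpha.
have /andP [hk1 hk2] := truncn_itv ha0.
have hk : (k < N)%N by rewrite -(ltr_nat R); apply: le_lt_trans hk1 haN.
pose K : 'I_N := Ordinal hk.
set f := alpha - k%:R.
pose e (a : 'I_N) : R := if (a < k)%N then 1 else if a == K then f else 0.
have hpe : psum lam alpha = \sum_a lam a * e a.
  rewrite /psum -/k -/f (big_ord_widen N (fun i => nth 0 (lamseq lam) i) (ltnW hk)).
  have -> : nth 0 (lamseq lam) k = lam K by rewrite -nth_lamseq.
  have -> : \sum_a lam a * e a = \sum_(a : 'I_N) ((if (a < k)%N then lam a else 0) + (a == K)%:R * (f * lam K)).
    apply: eq_bigr => a _; rewrite /e.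
    case: ifP => hak.
      have -> : (a == K) = false by apply/negbTE; apply: contraTneq hak => ->; rewrite ltnn.
      by rewrite /=; ring.
    case: ifP => haK; first by move/eqP: haK => ->; rewrite ?eqxx /=; ring.
    by rewrite ?haK /=; ring.
  rewrite big_split /= sum_delta_l -big_mkcond /=; congr (_ + _).
  by apply: eq_bigr => a _; rewrite nth_lamseq.
have hse : \sum_a e a = alpha.
  have -> : \sum_a e a = \sum_(a : 'I_N) ((if (a < k)%N then 1 else 0) + (a == K)%:R * f).
    apply: eq_bigr => a _; rewrite /e.
    case: ifP => hak.
      have -> : (a == K) = false by apply/negbTE; apply: contraTneq hak => ->; rewrite ltnn.
      by rewrite /=; ring.
    case: ifP => haK; first by rewrite ?haK /=; ring.
    by rewrite ?haK /=; ring.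
  rewrite big_split /= sum_delta_l -big_mkcond /=.
  rewrite -(big_ord_widen N (fun _ => (1 : R)) (ltnW hk)) sumr_const card_ord.
  by rewrite /f addrC subrK.
have key : \sum_a (lam a - lam K) * (d a - e a) =
    \sum_a lam a * d a - \sum_a lam a * e a - lam K * (\sum_a d a - \sum_a e a).
  rewrite mulrBr !mulr_sumr -!sumrB; apply: eq_bigr => a _; ring.
have ge : 0 <= \sum_a (lam a - lam K) * (d a - e a).
  apply: sumr_ge0 => a _; rewrite /e.
  have /andP [hd0 hd1] := hd a.
  case: ifP => hak.
    apply: mulr_le0; first by rewrite subr_le0; apply: hmono; exact: ltnW.
    by rewrite subr_le0.
  case: ifP => haK; first by move/eqP: haK => ->; rewrite subrr mul0r.
  rewrite subr0; apply: mulr_ge0 => //; rewrite subr_ge0; apply: hmono.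
  by rewrite /= leqNgt hak.
rewrite hpe; move: ge; rewrite key hsum hse subrr mulr0 subr0 subr_ge0 //.
Qed.

End KyFan.

End P9.
Import P9.

Module P10.

Section Core.
Variable R : realType.
Variable n : nat.
Hypothesis hn : (1 < n)%N.
Variable Rt : tensor4 R n.
Hypothesis hac : is_alg_curv Rt.
Variable h : 'I_(dimS20 n) -> 'M[R]_n.
Variable lam : 'I_(dimS20 n) -> R.
Hypothesis hsym : forall a, (h a)^T = h a.
Hypothesis htr : forall a, \tr (h a) = 0.
Hypothesis horth : forall a b, frob (h a) (h b) = (a == b)%:R.
Hypothesis heig : forall a, Rring Rt (h a) = lam a *: h a.
Hypothesis hmono : forall a b : 'I_(dimS20 n), (a <= b)%N -> lam a <= lam b.

Notation S := (\tr (Ric Rt)).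
Notation nR := (n%:R : R).
Notation NN := ((dimS20 n)%:R : R).

Lemma hn0' : (0 < n)%N. Proof. exact: ltnW. Qed.

Lemma core (u : 'I_n -> R) (A C alpha : R) :
  dot u u = 1 -> 0 <= A <= 1 -> 0 <= C <= 1 ->
  alpha = (1 - C) * (A * (nR - 1) + 1) + C * NN ->
  0 <= alpha -> alpha < NN ->
  psum lam alpha <= (1 - C) * (A * rho Rt u + (2 * nR * rho Rt u - S) / (nR * (nR - 1)))
                    + C * \sum_a lam a.
Proof.
move=> hu /andP[hA0 hA1] /andP[hC0 hC1] halpha ha0 haN.
have hnR : nR != 0 by rewrite pnatr_eq0 -lt0n hn0'.
have hn1 : nR - 1 != 0.
  by rewrite subr_eq0 pnatr_eq1; apply/eqP => e; move: hn; rewrite e.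
pose k := nR / (nR - 1).
have hk0 : 0 <= k.
  rewrite /k divr_ge0 ?ler0n // subr_ge0 ler1n; exact: hn0'.
pose d a := (1 - C) * (A * (2 * (pp h u a - ss h u a ^+ 2)) + k * ss h u a ^+ 2) + C.
have hd a : 0 <= d a <= 1.
  have b1 := B1 h hu a.
  have b2 := B2 hn hsym htr horth hu a.
  have s0 : 0 <= ss h u a ^+ 2 by exact: sqr_ge0.
  set P := pp h u a in b1 b2 *; set Q := ss h u a ^+ 2 in b1 b2 s0 *.
  have i0 : 0 <= A * (2 * (P - Q)) + k * Q.
    apply: addr_ge0; [apply: mulr_ge0 => //; lra | exact: mulr_ge0].
  have i1 : A * (2 * (P - Q)) + k * Q <= 1.
    have : A * (2 * (P - Q)) <= 2 * (P - Q).
      rewrite -[X in _ <= X]mul1r; apply: ler_wpM2r => //; lra.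
    rewrite /k; lra.
  set I := A * (2 * (P - Q)) + k * Q in i0 i1 *.
  have m1 : 0 <= (1 - C) * I by apply: mulr_ge0 => //; lra.
  have m2 : 0 <= (1 - C) * (1 - I) by apply: mulr_ge0; lra.
  rewrite /d -/I; apply/andP; split; lra.
have sd : \sum_a d a = alpha.
  have -> : \sum_a d a = \sum_a (((1 - C) * A / 2) * (4 * pp h u a)
       + ((1 - C) * (k - 2 * A)) * (ss h u a ^+ 2) + C * 1).
    by apply: eq_bigr => a _; rewrite /d; field.
  rewrite sum3 (T2b hn0' hsym htr horth) (T3b hn0' hsym htr horth) hu sumr_const card_ord.
  rewrite (NR hn0' hsym htr horth) in halpha *.
  rewrite halpha /k; field; rewrite ?hn1 ?hnR //.
have := kyfan hmono hd sd ha0 haN.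
have -> : \sum_a lam a * d a = \sum_a (((1 - C) * A / 2) * (lam a * (4 * pp h u a))
       + ((1 - C) * (k - 2 * A)) * (lam a * ss h u a ^+ 2) + C * lam a).
  by apply: eq_bigr => a _; rewrite /d; field.
rewrite sum3 (T2 hn0' hac hsym htr horth heig) (T3 hn0' hac hsym htr horth heig) hu.
move=> H; apply: le_trans H _; rewrite le_eqVlt; apply/orP; left; apply/eqP.
rewrite /k; field; rewrite ?hn1 ?hnR //.
Qed.

End Core.

End P10.
Import P10.

Module P11.

Section Reduce.
Variable R : realType.
Variable n : nat.
Variable Rt : tensor4 R n.

Lemma vTv (v : 'cV[R]_n) : (v^T *m v) 0 0 = dot (fun i => v i 0) (fun i => v i 0).
Proof. by rewrite mxE; apply: eq_bigr => i _; rewrite mxE. Qed.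

Lemma vTAv (v : 'cV[R]_n) : (v^T *m Ric Rt *m v) 0 0 = rho Rt (fun i => v i 0).
Proof.
rewrite mxE /rho exchange_big /=; apply: eq_bigr => j _.
rewrite mxE mulr_suml; apply: eq_bigr => i _; by rewrite mxE.
Qed.

Lemma dot_scale (k : R) (x : 'I_n -> R) :
  dot (fun i => k * x i) (fun i => k * x i) = k ^+ 2 * dot x x.
Proof. by rewrite /dot mulr_sumr; apply: eq_bigr => i _; ring. Qed.

Lemma rho_scale (k : R) (x : 'I_n -> R) :
  rho Rt (fun i => k * x i) = k ^+ 2 * rho Rt x.
Proof.
rewrite /rho mulr_sumr; apply: eq_bigr => i _; rewrite mulr_sumr.
by apply: eq_bigr => j _; ring.
Qed.

Lemma dot_ge0 (x : 'I_n -> R) : 0 <= dot x x.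
Proof. by apply: sumr_ge0 => i _; rewrite -expr2 sqr_ge0. Qed.

Lemma normalize (x : 'I_n -> R) : 0 < dot x x ->
  exists u, dot u u = 1 /\ rho Rt x = dot x x * rho Rt u.
Proof.
move=> ht; set t := dot x x in ht *.
have hs : 0 < Num.sqrt t by rewrite sqrtr_gt0.
have hs2 : Num.sqrt t ^+ 2 = t by rewrite sqr_sqrtr // ltW.
exists (fun i => (Num.sqrt t)^-1 * x i); split.
  rewrite dot_scale -/t exprVn hs2 mulVf //; exact: lt0r_neq0.
rewrite rho_scale exprVn hs2 mulrA mulfV ?mul1r //; exact: lt0r_neq0.
Qed.

Lemma dot0 (x : 'I_n -> R) : dot x x = 0 -> forall i, x i = 0.
Proof.
move=> h0 i; have := h0; rewrite /dot => /eqP; rewrite psumr_eq0 => [|j _].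
  by move/allP => /(_ i (mem_index_enum _)); rewrite mulf_eq0 orbb => /eqP.
by rewrite -expr2 sqr_ge0.
Qed.

Lemma reduce_ge c : (forall u, dot u u = 1 -> c <= rho Rt u) -> form_ge (Ric Rt) c.
Proof.
move=> H v; rewrite vTv vTAv; set x := (fun i => v i 0).
have := dot_ge0 x; rewrite le_eqVlt => /orP [/eqP e | ht].
  have z := dot0 (esym e).
  rewrite -e mulr0 /rho; apply: sumr_ge0 => i _; apply: sumr_ge0 => j _.
  by rewrite z !mul0r.
have [u [hu ->]] := normalize ht.
by rewrite mulrC ler_pM2l // H.
Qed.

Lemma reduce_gt c : (forall u, dot u u = 1 -> c < rho Rt u) -> form_gt (Ric Rt) c.
Proof.
move=> H v hv; rewrite vTv vTAv; set x := (fun i => v i 0).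
have ht : 0 < dot x x.
  have := dot_ge0 x; rewrite le_eqVlt => /orP [/eqP e | //].
  have z := dot0 (esym e); move/eqP: hv; case; apply/matrixP => i j.
  by rewrite (ord1 j) mxE; have := z i; rewrite /x => ->.
have [u [hu ->]] := normalize ht.
by rewrite mulrC ltr_pM2l // H.
Qed.

End Reduce.

Lemma finish (R : realType) (rho c K Y p x : R) : 0 < K -> p <= Y -> rho - c = K * (Y + x) ->
  (0 <= p + x -> c <= rho) /\ (0 < p + x -> c < rho).
Proof.
move=> hK hpY e; split => hp.
  have : 0 <= K * (Y + x) by apply: mulr_ge0; lra.
  lra.
have : 0 < K * (Y + x) by apply: mulr_gt0; lra.
lra.
Qed.

Lemma inC_conv (R : realType) (n : nat) (lam : 'I_(dimS20 n) -> R) alpha theta :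
  0 < alpha ->
  (inC lam alpha theta -> 0 <= psum lam alpha + alpha * theta * lambar lam) /\
  (inCint lam alpha theta -> 0 < psum lam alpha + alpha * theta * lambar lam).
Proof.
move=> ha; rewrite /inC /inCint; split => H.
  have := ler_wpM2l (ltW ha) H; rewrite mulVKf ?lt0r_neq0 //; lra.
move: H; rewrite -(ltr_pM2l ha) mulVKf ?lt0r_neq0 //; lra.
Qed.


End P11.
Import P11.

Unset Implicit Arguments.
Set Strict Implicit.

Theorem proposition3p1 (R : realType) (n : nat) (Rt : tensor4 R n)
  (h : 'I_(dimS20 n) -> 'M[R]_n) (lam : 'I_(dimS20 n) -> R) (alpha theta : R) :
  (3 <= n)%N -> -1 < theta -> is_alg_curv Rt -> sorted_eigbasis Rt h lam ->
  let c1 := (n%:R - 1) / (alpha + 1) * (1 - alpha * theta) * lambar lam in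
  let c2 := (n%:R - 1) *
      ((n%:R ^+ 2 - n%:R * (alpha * theta + alpha - 1) + 2 * (alpha * theta - 1))
       / (n%:R ^+ 2 + n%:R - 2 * (alpha + 1))) * lambar lam in
  [/\ (1 <= alpha <= n%:R -> inC lam alpha theta -> form_ge (Ric Rt) c1),
      (1 <= alpha <= n%:R -> inCint lam alpha theta -> form_gt (Ric Rt) c1),
      (n%:R <= alpha < (dimS20 n)%:R -> inC lam alpha theta -> form_ge (Ric Rt) c2) &
      (n%:R <= alpha < (dimS20 n)%:R -> inCint lam alpha theta -> form_gt (Ric Rt) c2)].
Proof.
move=> hn3 hth hac [hst horth heig hmono] c1 c2.
have hsym a : (h a)^T = h a by case: (hst a).
have htr a : \tr (h a) = 0 by case: (hst a).
have hn0 : (0 < n)%N by apply: leq_trans hn3.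
have hn1 : (1 < n)%N by apply: leq_trans hn3.
have n3 : 3 <= (n%:R : R) by rewrite (ler_nat R 3 n).
have T1e := T1 hn0 hac hsym htr horth heig.
have NRe := NR hn0 hsym htr horth.
set nR := (n%:R : R) in n3 T1e NRe c1 c2 *.
set S := \tr (Ric Rt) in T1e *.
have hnR : nR != 0 by rewrite /nR pnatr_eq0 -lt0n hn0.
have lb : lambar lam = S / (nR * (nR - 1)).
  rewrite /lambar T1e NRe; field; apply/andP; split; [lra|]; apply/andP; split; lra.
have NNn : nR < (dimS20 n)%:R.
  rewrite NRe; have : 0 < (nR - 2) * (nR + 1) by apply: mulr_gt0; lra. lra.
have key1 : 1 <= alpha <= nR -> forall u, dot u u = 1 -> exists K Y,
    [/\ 0 < K, psum lam alpha <= Y & rho Rt u - c1 = K * (Y + alpha * theta * lambar lam)].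
  move=> /andP[ha1 han] u hu.
  have ha0 : 0 < alpha by lra.
  have hA : 0 <= (alpha - 1) / (nR - 1) <= 1.
    apply/andP; split; first by apply: divr_ge0; lra.
    by rewrite ler_pdivrMr; lra.
  have hC : (0 <= (0:R)) && ((0:R) <= 1) by rewrite lexx ler01.
  have ea : alpha = (1 - 0) * ((alpha - 1) / (nR - 1) * (nR - 1) + 1) + 0 * (dimS20 n)%:R.
    by field; lra.
  have H := @core R n hn1 Rt hac h lam hsym htr horth heig hmono u ((alpha - 1) / (nR - 1)) 0 alpha
    hu hA hC ea (ltW ha0) (le_lt_trans han NNn).
  exists ((nR - 1) / (alpha + 1)).
  exists ((1 - 0) * ((alpha - 1) / (nR - 1) * rho Rt u + (2 * nR * rho Rt u - S) / (nR * (nR - 1)))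
     + 0 * \sum_a lam a).
  split => //; first by apply: divr_gt0; lra.
  rewrite /c1 lb; field; apply/andP; split; [lra|]; apply/andP; split; lra.
have key2 : nR <= alpha < (dimS20 n)%:R -> forall u, dot u u = 1 -> exists K Y,
    [/\ 0 < K, psum lam alpha <= Y & rho Rt u - c2 = K * (Y + alpha * theta * lambar lam)].
  move=> /andP[han haN] u hu.
  have ha0 : 0 < alpha by lra.
  have hNn : 0 < (dimS20 n)%:R - nR by lra.
  have hA : (0 <= (1:R)) && ((1:R) <= 1) by rewrite ler01 lexx.
  set C := (alpha - nR) / ((dimS20 n)%:R - nR).
  have hC : 0 <= C <= 1.
    apply/andP; split; first by apply: divr_ge0; lra.
    by rewrite ler_pdivrMr; lra.
  have ea : alpha = (1 - C) * (1 * (nR - 1) + 1) + C * (dimS20 n)%:R.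
    by rewrite /C; field; lra.
  have H := @core R n hn1 Rt hac h lam hsym htr horth heig hmono u 1 C alpha
    hu hA hC ea (ltW ha0) haN.
  exists ((nR - 1) * ((dimS20 n)%:R - nR) / (((dimS20 n)%:R - alpha) * (nR + 1))).
  exists ((1 - C) * (1 * rho Rt u + (2 * nR * rho Rt u - S) / (nR * (nR - 1)))
     + C * \sum_a lam a).
  split => //.
    apply: divr_gt0; first by apply: mulr_gt0; lra.
    by apply: mulr_gt0; lra.
  rewrite /c2 /C lb T1e NRe in haN hNn *.
  field.
  rewrite -/nR; repeat (apply/andP; split); apply/eqP; lra.
split.
- move=> ha hC; apply: reduce_ge => u hu.
  have ha0 : 0 < alpha by case/andP: ha => ? _; lra.
  have [K [Y [hK hY e]]] := key1 ha u hu.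
  exact: (finish hK hY e).1 ((@inC_conv R n lam alpha theta ha0).1 hC).
- move=> ha hC; apply: reduce_gt => u hu.
  have ha0 : 0 < alpha by case/andP: ha => ? _; lra.
  have [K [Y [hK hY e]]] := key1 ha u hu.
  exact: (finish hK hY e).2 ((@inC_conv R n lam alpha theta ha0).2 hC).
- move=> ha hC; apply: reduce_ge => u hu.
  have ha0 : 0 < alpha by case/andP: ha => ? _; lra.
  have [K [Y [hK hY e]]] := key2 ha u hu.
  exact: (finish hK hY e).1 ((@inC_conv R n lam alpha theta ha0).1 hC).
- move=> ha hC; apply: reduce_gt => u hu.
  have ha0 : 0 < alpha by case/andP: ha => ? _; lra.
  have [K [Y [hK hY e]]] := key2 ha u hu.
  exact: (finish hK hY e).2 ((@inC_conv R n lam alpha theta ha0).2 hC).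
Qed.
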